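(* Let $\theta\in\mathbb R\setminus\mathbb Q$. Then $H^0(\mathcal A_\theta^{alg},{}_{-1}\mathcal A_\theta^{alg*})\cong\mathbb C^4$, and every class is $\mathbb Z_2$-invariant, so $H^0(\mathcal A_\theta^{alg},{}_{-1}\mathcal A_\theta^{alg*})^{\mathbb Z_2}\cong\mathbb C^4$. A basis is given by the four cocycles $\mathcal D_{a,b}$, $a,b\in\{0,1\}$, where $\mathcal D_{a,b}$ is the element $\sum\varphi_{n,m}U_1^nU_2^m$ of ${}_{-1}\mathcal A_\theta^{alg*}$ supported on $(n,m)\equiv(a,b)\pmod 2$ satisfying $U_1^{-1}\varphi=\varphi U_1$, $U_2^{-1}\varphi=\varphi U_2$ and $\varphi_{a,b}=1$.
   Context: Let $\lambda=e^{2\pi i\theta}$. $\mathcal A_\theta^{alg}$ is the complex algebra of finite linear combinations $\sum a_{n,m}U_1^nU_2^m$ generated by invertible $U_1,U_2$ with $U_2U_1=\lambda U_1U_2$. Its linear dual $\mathcal A_\theta^{alg*}$ is identified with the space of formal (arbitrary, not necessarily finitely supported) series $\sum_{(n,m)\in\mathbb Z^2}\varphi_{n,m}U_1^nU_2^m$ with the standard bimodule structure. $\mathbb Z_2$ acts on $\mathcal A_\theta^{alg}$ (and hence on $\mathcal A_\theta^{alg*}$ and on the cohomology) by the involution $\sigma(U_j)=U_j^{-1}$. ${}_{-1}\mathcal A_\theta^{alg*}$ is $\mathcal A_\theta^{alg*}$ with the bimodule structure twisted on the left: $\alpha\cdot a=\sigma(\alpha)a$, $a\cdot\alpha=a\alpha$.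 $H^\bullet(A,M)$ is Hochschild cohomology, and $(\cdot)^{\mathbb Z_2}$ denotes the invariants of the induced $\mathbb Z_2$-action. *)

(* Defs.v *)
From Stdlib Require Import Reals ZArith List.
Open Scope R_scope.

Definition Cx : Type := (R * R)%type.
Definition C0 : Cx := (0, 0).
Definition C1 : Cx := (1, 0).
Definition Cadd (x y : Cx) : Cx := (fst x + fst y, snd x + snd y).
Definition Cmul (x y : Cx) : Cx :=
  (fst x * fst y - snd x * snd y, fst x * snd y + snd x * fst y).

Definition lampow (theta : R) (k : Z) : Cx :=
  (cos (2 * PI * theta * IZR k), sin (2 * PI * theta * IZR k)).

Definition irrational (theta : R) : Prop :=
  forall p q : Z, q <> 0%Z -> theta <> IZR p / IZR q.

(* An element is a finite list of terms (p, q, c) meaning c * U1^p U2^q. *)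
Definition Aalg : Type := list (Z * Z * Cx).

Definition series : Type := Z -> Z -> Cx.

Definition ser0 : series := fun _ _ => C0.
Definition ser_add (f g : series) : series := fun n m => Cadd (f n m) (g n m).
Definition ser_scale (c : Cx) (f : series) : series := fun n m => Cmul c (f n m).

(* Using U2 U1 = lambda U1 U2, i.e. U2^m U1^p = lambda^{mp} U1^p U2^m:
   (U1^p U2^q) * (sum phi_{n,m} U1^n U2^m) has coefficient at (N,M)
     lambda^{q (N-p)} phi_{N-p, M-q}. *)
Definition mono_left (theta : R) (p q : Z) (phi : series) : series :=
  fun N M => Cmul (lampow theta (q * (N - p))) (phi (N - p)%Z (M - q)%Z).

(* (sum phi_{n,m} U1^n U2^m) * (U1^p U2^q) has coefficient at (N,M)
     lambda^{(M-q) p} phi_{N-p, M-q}. *)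
Definition mono_right (theta : R) (p q : Z) (phi : series) : series :=
  fun N M => Cmul (lampow theta ((M - q) * p)) (phi (N - p)%Z (M - q)%Z).

Definition act_left (theta : R) (a : Aalg) (phi : series) : series :=
  fold_right (fun t acc =>
    let '(p, q, c) := t in ser_add (ser_scale c (mono_left theta p q phi)) acc)
    ser0 a.
Definition act_right (theta : R) (phi : series) (a : Aalg) : series :=
  fold_right (fun t acc =>
    let '(p, q, c) := t in ser_add (ser_scale c (mono_right theta p q phi)) acc)
    ser0 a.

Definition sigmaA (a : Aalg) : Aalg :=
  map (fun t => let '(p, q, c) := t in ((- p)%Z, (- q)%Z, c)) a.

Definition sigma_ser (phi : series) : series := fun n m => phi (- n)%Z (- m)%Z.

(* Twisted bimodule _{-1}A_theta^alg*:  alpha . phi = sigma(alpha) phi,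
   phi . alpha = phi alpha. *)
Definition tw_left (theta : R) (a : Aalg) (phi : series) : series :=
  act_left theta (sigmaA a) phi.
Definition tw_right (theta : R) (phi : series) (a : Aalg) : series :=
  act_right theta phi a.

(* Hochschild 0-cocycles (= H^0, since there are no 0-coboundaries):
   H^0(A, M) = { phi in M | alpha . phi = phi . alpha for all alpha in A }. *)
Definition H0 (theta : R) (phi : series) : Prop :=
  forall (a : Aalg) (n m : Z), tw_left theta a phi n m = tw_right theta phi a n m.

Definition monoA (p q : Z) : Aalg := (p, q, C1) :: nil.

Definition supported_on_parity (a b : bool) (phi : series) : Prop :=
  forall n m : Z, (Z.odd n <> a \/ Z.odd m <> b) -> phi n m = C0.

Definition is_D (theta : R) (a b : bool) (phi : series) : Prop :=
  supported_on_parity a b phi /\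
  (forall n m, act_left theta (monoA (-1) 0) phi n m = act_right theta phi (monoA 1 0) n m) /\
  (forall n m, act_left theta (monoA 0 (-1)) phi n m = act_right theta phi (monoA 0 1) n m) /\
  phi (Z.b2z a) (Z.b2z b) = C1.

Definition comb4 (c : bool -> bool -> Cx) (D : bool -> bool -> series) : series :=
  fun n m =>
    Cadd (Cadd (Cmul (c false false) (D false false n m))
               (Cmul (c false true)  (D false true  n m)))
         (Cadd (Cmul (c true false)  (D true false  n m))
               (Cmul (c true true)   (D true true   n m))).

(* Main.v *)
Require Import Defs.
From Stdlib Require Import Reals ZArith List Lia Bool.
Open Scope R_scope.

Lemma Cmul_assoc x y z : Cmul x (Cmul y z) = Cmul (Cmul x y) z.
Proof. destruct x, y, z; unfold Cmul; simpl; f_equal; ring. Qed.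
Lemma Cmul_comm x y : Cmul x y = Cmul y x.
Proof. destruct x, y; unfold Cmul; simpl; f_equal; ring. Qed.
Lemma Cmul_1l x : Cmul Defs.C1 x = x.
Proof. destruct x; unfold Cmul, Defs.C1; simpl; f_equal; ring. Qed.
Lemma Cmul_1r x : Cmul x Defs.C1 = x.
Proof. destruct x; unfold Cmul, Defs.C1; simpl; f_equal; ring. Qed.
Lemma Cmul_0r x : Cmul x Defs.C0 = Defs.C0.
Proof. destruct x; unfold Cmul, Defs.C0; simpl; f_equal; ring. Qed.
Lemma Cadd_0r x : Cadd x Defs.C0 = x.
Proof. destruct x; unfold Cadd, Defs.C0; simpl; f_equal; ring. Qed.
Lemma Cadd_0l x : Cadd Defs.C0 x = x.
Proof. destruct x; unfold Cadd, Defs.C0; simpl; f_equal; ring. Qed.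

Lemma lampow_add t x y : Cmul (lampow t x) (lampow t y) = lampow t (x + y).
Proof.
  unfold lampow, Cmul; simpl. rewrite plus_IZR.
  replace (2 * PI * t * (IZR x + IZR y)) with
    (2 * PI * t * IZR x + 2 * PI * t * IZR y) by ring.
  rewrite cos_plus, sin_plus. f_equal; ring.
Qed.
Lemma lampow_0 t : lampow t 0 = Defs.C1.
Proof. unfold lampow, Defs.C1. simpl. rewrite Rmult_0_r, cos_0, sin_0. reflexivity. Qed.

Lemma act_left_mono t p q phi n m :
  act_left t (monoA p q) phi n m = mono_left t p q phi n m.
Proof. unfold act_left, monoA; cbn [fold_right]. unfold ser_add, ser_scale, ser0.
  rewrite Cadd_0r, Cmul_1l; reflexivity. Qed.
Lemma act_right_mono t p q phi n m :
  act_right t phi (monoA p q) n m = mono_right t p q phi n m.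
Proof. unfold act_right, monoA; cbn [fold_right]. unfold ser_add, ser_scale, ser0.
  rewrite Cadd_0r, Cmul_1l; reflexivity. Qed.

Definition Rec t (psi : series) : Prop :=
  (forall n m, psi (n+2)%Z m = Cmul (lampow t m) (psi n m)) /\
  (forall n m, psi n (m+2)%Z = Cmul (lampow t n) (psi n m)).

Lemma rec_of t psi :
  (forall n m, act_left t (monoA (-1) 0) psi n m = act_right t psi (monoA 1 0) n m) ->
  (forall n m, act_left t (monoA 0 (-1)) psi n m = act_right t psi (monoA 0 1) n m) ->
  Rec t psi.
Proof.
  intros H1 H2; split; intros n m.
  - specialize (H1 (n+1)%Z m). rewrite act_left_mono, act_right_mono in H1.
    unfold mono_left, mono_right in H1.
    replace (n + 1 - -1)%Z with (n+2)%Z in H1 by ring.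
    replace (n + 1 - 1)%Z with n in H1 by ring.
    replace (m - 0)%Z with m in H1 by ring.
    replace (0 * (n + 2))%Z with 0%Z in H1 by ring.
    replace (m * 1)%Z with m in H1 by ring.
    rewrite lampow_0, Cmul_1l in H1. exact H1.
  - specialize (H2 n (m+1)%Z). rewrite act_left_mono, act_right_mono in H2.
    unfold mono_left, mono_right in H2.
    replace (m + 1 - -1)%Z with (m+2)%Z in H2 by ring.
    replace (m + 1 - 1)%Z with m in H2 by ring.
    replace (n - 0)%Z with n in H2 by ring.
    replace ((m * 0))%Z with 0%Z in H2 by ring.
    replace (-1 * n)%Z with (- n)%Z in H2 by ring.
    rewrite lampow_0, Cmul_1l in H2. rewrite <- H2.
    rewrite Cmul_assoc, lampow_add. replace (n + - n)%Z with 0%Z by ring.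
    rewrite lampow_0, Cmul_1l. reflexivity.
Qed.

Lemma period (f : Z -> Cx) : (forall x, f (x+2)%Z = f x) -> forall x k, f (x + 2*k)%Z = f x.
Proof.
  intros Hf x k. induction k using Z.peano_ind.
  - f_equal; ring.
  - rewrite <- IHk, <- (Hf (x + 2 * k)%Z). f_equal. lia.
  - rewrite <- IHk, <- (Hf (x + 2 * Z.pred k)%Z). f_equal. lia.
Qed.

Definition E (a b : bool) (n m : Z) : Z := ((n*m - Z.b2z a * Z.b2z b)/2)%Z.

Lemma E_n2 a b n m : E a b (n+2) m = (m + E a b n m)%Z.
Proof. unfold E. rewrite <- Z.div_add_l by lia. f_equal; ring. Qed.
Lemma E_m2 a b n m : E a b n (m+2) = (n + E a b n m)%Z.
Proof. unfold E. rewrite <- Z.div_add_l by lia. f_equal; ring. Qed.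
Lemma E_base a b : E a b (Z.b2z a) (Z.b2z b) = 0%Z.
Proof. unfold E. rewrite Z.sub_diag. reflexivity. Qed.

Lemma decomp n : n = (Z.b2z (Z.odd n) + 2 * Z.div2 n)%Z.
Proof. rewrite (Z.div2_odd n) at 1. ring. Qed.

Lemma rec_form t psi : Rec t psi -> forall n m,
  psi n m = Cmul (psi (Z.b2z (Z.odd n)) (Z.b2z (Z.odd m)))
                 (lampow t (E (Z.odd n) (Z.odd m) n m)).
Proof.
  intros [Hn Hm] n m.
  set (a := Z.odd n). set (b := Z.odd m).
  set (g := fun x y => Cmul (lampow t (- E a b x y)) (psi x y)).
  assert (G1 : forall y x, g (x+2)%Z y = g x y).
  { intros y x; unfold g. rewrite Hn, Cmul_assoc, lampow_add, E_n2.
    f_equal; f_equal; ring. }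
  assert (G2 : forall x y, g x (y+2)%Z = g x y).
  { intros x y; unfold g. rewrite Hm, Cmul_assoc, lampow_add, E_m2.
    f_equal; f_equal; ring. }
  assert (Hg : g n m = psi (Z.b2z a) (Z.b2z b)).
  { rewrite (decomp n), (decomp m). fold a b.
    rewrite (period (fun x => g x _) (G1 _)).
    rewrite (period (fun y => g _ y) (G2 _)).
    unfold g. rewrite E_base. simpl. rewrite lampow_0, Cmul_1l. reflexivity. }
  rewrite <- Hg. unfold g. rewrite (Cmul_comm (lampow t _) (psi n m)), <- Cmul_assoc, lampow_add.
  replace (- E a b n m + E a b n m)%Z with 0%Z by ring.
  rewrite lampow_0, Cmul_comm, Cmul_1l. reflexivity.
Qed.

Definition Dser (t : R) (a b : bool) : series := fun n m =>
  if eqb (Z.odd n) a && eqb (Z.odd m) b then lampow t (E a b n m) else Defs.C0.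

Lemma odd_shift x p : Z.odd (x - - p) = Z.odd (x - p).
Proof. replace (x - - p)%Z with (x - p + 2 * p)%Z by ring. apply Z.odd_add_mul_2. Qed.

Lemma mono_eq t a b p q N M :
  mono_left t (-p) (-q) (Dser t a b) N M = mono_right t p q (Dser t a b) N M.
Proof.
  unfold mono_left, mono_right, Dser. rewrite !odd_shift.
  destruct (eqb (Z.odd (N - p)) a && eqb (Z.odd (M - q)) b).
  - rewrite !lampow_add. f_equal. unfold E.
    replace ((N - - p) * (M - - q) - Z.b2z a * Z.b2z b)%Z with
      ((p*M+q*N)*2 + ((N - p) * (M - q) - Z.b2z a * Z.b2z b))%Z by ring.
    rewrite Z.div_add_l by lia. ring.
  - rewrite !Cmul_0r. reflexivity.
Qed.

Lemma ser_add_eq f g n m : ser_add f g n m = Cadd (f n m) (g n m).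
Proof. reflexivity. Qed.
Lemma ser_scale_eq c f n m : ser_scale c f n m = Cmul c (f n m).
Proof. reflexivity. Qed.

Lemma H0_D t a b : H0 t (Dser t a b).
Proof.
  intros l n m. unfold tw_left, tw_right, act_left, act_right, sigmaA.
  induction l as [|[[p q] c] l IH].
  - reflexivity.
  - cbn [map fold_right]. rewrite !ser_add_eq, !ser_scale_eq, IH, mono_eq. reflexivity.
Qed.

Lemma rec_H0 t psi : H0 t psi -> Rec t psi.
Proof.
  intros H. apply rec_of; intros n m.
  - exact (H (monoA 1 0) n m).
  - exact (H (monoA 0 1) n m).
Qed.

Lemma odd_b2z a : Z.odd (Z.b2z a) = a.
Proof. destruct a; reflexivity. Qed.

Lemma D_at t a b a' b' : Dser t a' b' (Z.b2z a) (Z.b2z b) =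
  if eqb a a' && eqb b b' then Defs.C1 else Defs.C0.
Proof.
  unfold Dser. rewrite !odd_b2z.
  destruct (eqb a a') eqn:Ha, (eqb b b') eqn:Hb; cbn [andb]; try reflexivity.
  apply eqb_prop in Ha, Hb. subst. rewrite E_base. apply lampow_0.
Qed.

Theorem mainTheorem5 (theta : R) (Htheta : irrational theta) :
  exists D : bool -> bool -> series,
    (* D_{a,b} is the (unique) element with the defining properties *)
    (forall a b, is_D theta a b (D a b)) /\
    (forall a b psi, is_D theta a b psi -> forall n m, psi n m = D a b n m) /\
    (* each D_{a,b} is a 0-cocycle of _{-1}A_theta^alg* *)
    (forall a b, H0 theta (D a b)) /\
    (* the D_{a,b} form a basis of H^0, so H^0 is isomorphic to Cx^4 *)
    (forall psi, H0 theta psi ->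
       exists c : bool -> bool -> Cx,
         (forall n m, psi n m = comb4 c D n m) /\
         (forall c' : bool -> bool -> Cx,
            (forall n m, psi n m = comb4 c' D n m) -> forall a b, c' a b = c a b)) /\
    (* every class is Z_2-invariant, so H^0^{Z_2} = H^0 = Cx^4 *)
    (forall psi, H0 theta psi -> forall n m, sigma_ser psi n m = psi n m).
Proof.
  exists (Dser theta). split; [|split; [|split; [|split]]].
  - intros a b. split; [|split; [|split]].
    + intros n m Hnm. unfold Dser.
      destruct Hnm as [Hn|Hm].
      * destruct (eqb (Z.odd n) a) eqn:E1; [apply eqb_prop in E1; contradiction|reflexivity].
      * destruct (eqb (Z.odd m) b) eqn:E1; [apply eqb_prop in E1; contradiction|].
        rewrite andb_false_r. reflexivity.
    + intros n m. exact (H0_D theta a b (monoA 1 0) n m).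
    + intros n m. exact (H0_D theta a b (monoA 0 1) n m).
    + rewrite D_at, !eqb_reflx. reflexivity.
  - intros a b psi [Hs [H1 [H2 Hv]]] n m.
    pose proof (rec_form theta psi (rec_of theta psi H1 H2) n m) as Hf.
    unfold Dser.
    destruct (eqb (Z.odd n) a && eqb (Z.odd m) b) eqn:Hc.
    + apply andb_prop in Hc as [Ha Hb]. apply eqb_prop in Ha, Hb.
      rewrite Hf, Ha, Hb, Hv, Cmul_1l. reflexivity.
    + apply Hs. destruct (Bool.bool_dec (Z.odd n) a) as [e|e]; [right|left; exact e].
      intro e'. rewrite e, e', !eqb_reflx in Hc. discriminate.
  - apply H0_D.
  - intros psi Hpsi.
    pose proof (rec_form theta psi (rec_H0 theta psi Hpsi)) as Hf.
    exists (fun a b => psi (Z.b2z a) (Z.b2z b)). split.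
    + intros n m. rewrite Hf. unfold comb4, Dser.
      destruct (Z.odd n), (Z.odd m); cbn [eqb andb];
        rewrite ?Cmul_0r, ?Cadd_0l, ?Cadd_0r; reflexivity.
    + intros c' Hc' a b. rewrite (Hc' (Z.b2z a) (Z.b2z b)). unfold comb4.
      rewrite !D_at. destruct a, b; cbn [eqb andb];
        rewrite ?Cmul_0r, ?Cmul_1r, ?Cadd_0l, ?Cadd_0r; reflexivity.
  - intros psi Hpsi n m. unfold sigma_ser.
    pose proof (rec_form theta psi (rec_H0 theta psi Hpsi)) as Hf.
    rewrite (Hf (-n)%Z), (Hf n), !Z.odd_opp. unfold E. rewrite Z.mul_opp_opp. reflexivity.
Qed.
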